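(* Let $G$ be a finite group and let $S=\bigoplus_{g\in G}S_g$ be an epsilon-strongly $G$-graded ring with principal component $R=S_e$. If $R$ is left (respectively right) noetherian, then $S$ is left (respectively right) noetherian.
   Context: All rings are associative with multiplicative identity $1\neq 0$. A ring $S$ is $G$-graded if $S=\bigoplus_{g\in G}S_g$ for additive subgroups $S_g$ with $S_gS_h\subseteq S_{gh}$ for all $g,h\in G$; $S_e$ is the principal component. $S$ is epsilon-strongly $G$-graded if (a) $S_gS_{g^{-1}}S_g=S_g$ for all $g\in G$, and (b) for each $g\in G$ the ideal $S_gS_{g^{-1}}$ of $S_e$ has a multiplicative identity. *)

(* Defs.v *)
From mathcomp Require Import all_boot all_order all_algebra all_fingroup.
Set Implicit Arguments. Unset Strict Implicit. Unset Printing Implicit Defensive.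
Import GRing.Theory.
Local Open Scope ring_scope.

Section Graded.
Variable R : nzRingType.

Definition is_addsubgroup (A : R -> Prop) : Prop :=
  A 0 /\ forall x y, A x -> A y -> A (x - y).

Definition prod2 (A B : R -> Prop) (x : R) : Prop :=
  exists n (a b : 'I_n -> R),
    (forall i, A (a i) /\ B (b i)) /\ x = \sum_(i < n) a i * b i.

Definition prod3 (A B C : R -> Prop) (x : R) : Prop :=
  exists n (a b c : 'I_n -> R),
    (forall i, [/\ A (a i), B (b i) & C (c i)]) /\
    x = \sum_(i < n) a i * b i * c i.

Definition is_graded (gT : finGroupType) (S_ : gT -> R -> Prop) : Prop :=
  [/\ (forall g, is_addsubgroup (S_ g)),
      (forall s, exists x : gT -> R,
          (forall g, S_ g (x g)) /\ s = \sum_(g : gT) x g),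
      (forall x : gT -> R, (forall g, S_ g (x g)) ->
          \sum_(g : gT) x g = 0 -> forall g, x g = 0)
    & (forall g h a b, S_ g a -> S_ h b -> S_ (g * h)%g (a * b))].

Definition epsilon_strongly_graded (gT : finGroupType) (S_ : gT -> R -> Prop)
  : Prop :=
  [/\ is_graded S_,
      (forall g x, S_ g x <-> prod3 (S_ g) (S_ g^-1%g) (S_ g) x)
    & (forall g, exists e, prod2 (S_ g) (S_ g^-1%g) e /\
          forall x, prod2 (S_ g) (S_ g^-1%g) x -> e * x = x /\ x * e = x)].

Definition left_ideal_in (T I : R -> Prop) : Prop :=
  [/\ (forall x, I x -> T x), I 0,
      (forall x y, I x -> I y -> I (x - y))
    & (forall r x, T r -> I x -> I (r * x))].

Definition right_ideal_in (T I : R -> Prop) : Prop :=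
  [/\ (forall x, I x -> T x), I 0,
      (forall x y, I x -> I y -> I (x - y))
    & (forall r x, T r -> I x -> I (x * r))].

Definition left_noetherian_in (T : R -> Prop) : Prop :=
  forall I : nat -> R -> Prop, (forall n, left_ideal_in T (I n)) ->
    (forall n x, I n x -> I n.+1 x) ->
    exists N, forall n, (N <= n)%N -> forall x, I n x -> I N x.

Definition right_noetherian_in (T : R -> Prop) : Prop :=
  forall I : nat -> R -> Prop, (forall n, right_ideal_in T (I n)) ->
    (forall n x, I n x -> I n.+1 x) ->
    exists N, forall n, (N <= n)%N -> forall x, I n x -> I N x.

Definition whole_ring : R -> Prop := fun _ => True.

End Graded.

(* Main.v *)
Require Import Defs.
From mathcomp Require Import all_boot all_order all_algebra all_fingroup.
Set Implicit Arguments. Unset Strict Implicit. Unset Printing Implicit Defensive.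
Import GRing.Theory.
Local Open Scope ring_scope.

Section Core.
Variable T : nzRingType.
Variable R : T -> Prop.
Hypothesis Radd : is_addsubgroup R.
Hypothesis Rmul : forall a b, R a -> R b -> R (a * b).
Hypothesis Rnoeth : left_noetherian_in R.

Definition submod (M : T -> Prop) :=
  [/\ M 0, (forall x y, M x -> M y -> M (x - y))
    & (forall r x, R r -> M x -> M (r * x))].

Definition NP (M : T -> Prop) :=
  forall N : nat -> T -> Prop, (forall n, submod (N n)) ->
    (forall n x, N n x -> M x) -> (forall n x, N n x -> N n.+1 x) ->
    exists K, forall n, (K <= n)%N -> forall x, N n x -> N K x.

Lemma submod_add M x y : submod M -> M x -> M y -> M (x + y).
Proof.
move=> [M0 MB _] Mx My.
have -> : x + y = x - (0 - y) by rewrite sub0r opprK.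
exact: (MB _ _ Mx (MB _ _ M0 My)).
Qed.

Lemma chain_mono (N : nat -> T -> Prop) :
  (forall n x, N n x -> N n.+1 x) -> forall m n x, (m <= n)%N -> N m x -> N n x.
Proof.
move=> HN m n x; elim: n => [|n IH].
  by rewrite leqn0 => /eqP ->.
rewrite leq_eqVlt => /orP [/eqP -> //|]; rewrite ltnS => H Hm.
by apply: HN; apply: IH.
Qed.

Lemma NP_mono M M' : NP M -> (forall x, M' x -> M x) -> NP M'.
Proof.
move=> H HM N Hs Hin Hc; apply: H => // n x Hx; apply: HM; exact: Hin Hx.
Qed.

Definition Rspan1 (u : T) := fun x => exists r, R r /\ x = r * u.

Lemma submod_Ru u : submod (Rspan1 u).
Proof.
case: Radd => R0 RB; split.
- by exists 0; rewrite mul0r.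
- by move=> x y [r [Hr ->]] [s [Hs ->]]; exists (r - s); rewrite mulrBl; split => //; apply: RB.
- by move=> r x Hr [s [Hs ->]]; exists (r * s); rewrite mulrA; split => //; apply: Rmul.
Qed.

Lemma NP_Ru u : NP (Rspan1 u).
Proof.
move=> N Hs Hin Hc.
case: Radd => R0 RB.
pose J n r := R r /\ N n (r * u).
have HJ : forall n, left_ideal_in R (J n).
  move=> n; case: (Hs n) => N0 NB NM; split.
  - by move=> x [].
  - by split => //; rewrite mul0r.
  - move=> x y [Hx Nx] [Hy Ny]; split; first exact: RB.
    by rewrite mulrBl; apply: NB.
  - move=> r x Hr [Hx Nx]; split; first exact: Rmul.
    by rewrite -mulrA; apply: NM.
have HJc : forall n x, J n x -> J n.+1 x by move=> n x [H1 H2]; split => //; apply: Hc.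
case: (Rnoeth HJ HJc) => K HK; exists K => n Hn x Hx.
case: (Hin _ _ Hx) => r [Hr Exr]; subst x.
by case: (HK n Hn r (conj Hr Hx)).
Qed.

Definition sumset (A B : T -> Prop) := fun x => exists a b, [/\ A a, B b & x = a + b].

Lemma NP_add A B : submod A -> submod B -> NP A -> NP B -> NP (sumset A B).
Proof.
move=> SA SB NA NB N Hs Hin Hc.
pose N1 n x := N n x /\ A x.
have HS1 : forall n, submod (N1 n).
  move=> n; case: (Hs n) => N0 NB' NM; case: SA => A0 AB AM; split.
  - by [].
  - by move=> x y [] ? ? [] ? ?; split; [apply: NB'|apply: AB].
  - by move=> r x Hr [] ? ?; split; [apply: NM|apply: AM].
case: (NA N1 HS1 (fun n x H => proj2 H)
         (fun n x H => conj (Hc _ _ (proj1 H)) (proj2 H))) => K1 HK1.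
pose N2 n b := B b /\ exists a, A a /\ N n (a + b).
have HS2 : forall n, submod (N2 n).
  move=> n; case: (Hs n) => N0 NB' NM; case: SA => A0 AB AM; case: SB => B0 BB BM;
  split.
  - by split => //; exists 0; rewrite addr0.
  - move=> x y [Bx [a [Aa Na]]] [By [b [Ab Nb]]]; split; first exact: BB.
    exists (a - b); split; first exact: AB.
    have -> : a - b + (x - y) = (a + x) - (b + y) by rewrite opprD addrACA.
    exact: NB'.
  - move=> r x Hr [Bx [a [Aa Na]]]; split; first exact: BM.
    exists (r * a); split; first exact: AM.
    by rewrite -mulrDr; apply: NM.
have Hc2 : forall n x, N2 n x -> N2 n.+1 x.
  by move=> n x [Bx [a [Aa Na]]]; split => //; exists a; split => //; apply: Hc.
case: (NB N2 HS2 (fun n x H => proj1 H) Hc2) => K2 HK2.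
exists (maxn K1 K2) => n Hn x Hx.
have H1n : (K1 <= n)%N by apply: leq_trans Hn; apply: leq_maxl.
have H2n : (K2 <= n)%N by apply: leq_trans Hn; apply: leq_maxr.
case: (Hin _ _ Hx) => a [b [Aa Bb Exab]].
have : N2 n b by split => //; exists a; split => //; rewrite -Exab.
move=> /(HK2 n H2n) [_ [a' [Aa' Na']]].
have Na'n : N n (a' + b) by apply: (chain_mono Hc H2n).
have HN1 : N1 n (a - a').
  split; last by case: SA => _ AB _; apply: AB.
  have -> : a - a' = x - (a' + b) by rewrite Exab opprD addrACA subrr addr0.
  by case: (Hs n) => _ NB' _; apply: NB'.
case: (HK1 n H1n _ HN1) => HN1' _.
have -> : x = (a - a') + (a' + b) by rewrite addrA subrK.
apply: submod_add; first exact: Hs.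
- apply: (chain_mono Hc _ HN1'); exact: leq_maxl.
- apply: (chain_mono Hc _ Na'); exact: leq_maxr.
Qed.

Fixpoint span (us : seq T) : T -> Prop :=
  match us with
  | [::] => fun x => x = 0
  | u :: us' => fun x => exists r y, [/\ R r, span us' y & x = r * u + y]
  end.

Lemma submod_span us : submod (span us).
Proof.
case: Radd => R0 RB.
elim: us => [|u us [S0 SB SM]] /=.
  split => //; first by move=> x y -> ->; rewrite subrr.
  by move=> r x _ ->; rewrite mulr0.
split.
- by exists 0, 0; rewrite mul0r addr0.
- move=> x y [r [x' [Hr Hx' ->]]] [s [y' [Hs Hy' ->]]].
  exists (r - s), (x' - y'); split; [exact: RB|exact: SB|].
  by rewrite mulrBl opprD addrACA.
- move=> r x Hr [s [y [Hs Hy ->]]]; exists (r * s), (r * y); split.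
  + exact: Rmul.
  + exact: SM.
  + by rewrite mulrDr mulrA.
Qed.

Lemma NP_span us : NP (span us).
Proof.
elim: us => [|u us IH] /=.
  move=> N Hs Hin Hc; exists 0%N => n _ x Hx.
  by rewrite (Hin _ _ Hx); case: (Hs 0%N).
apply: (@NP_mono (sumset (Rspan1 u) (span us))).
  apply: NP_add => //; [exact: submod_Ru|exact: submod_span|exact: NP_Ru].
move=> x [r [y [Hr Hy ->]]]; exists (r * u), y; split => //; by exists r.
Qed.

Lemma span_cat a b x y : span a x -> span b y -> span (a ++ b) (x + y).
Proof.
elim: a x => [|u a IH] x /=; first by move=> -> Hy; rewrite add0r.
move=> [r [x' [Hr Hx' ->]]] Hy; exists r, (x' + y); split => //.
  exact: IH.
by rewrite addrA.
Qed.

Lemma span_fam (J : Type) (l : seq J) (f r : J -> T) :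
  (forall j, R (r j)) -> span [seq f j | j <- l] (\sum_(j <- l) r j * f j).
Proof.
move=> Hr; elim: l => [|j l IH] /=; first by rewrite big_nil.
by rewrite big_cons; exists (r j), (\sum_(j <- l) r j * f j).
Qed.

Lemma span_all (I : finType) (A : I -> T -> Prop) :
  (forall x, exists x_ : I -> T, (forall i, A i (x_ i)) /\ x = \sum_(i : I) x_ i) ->
  (forall i, exists m (d : 'I_m -> T), forall s, A i s ->
      exists r : 'I_m -> T, (forall j, R (r j)) /\ s = \sum_(j < m) r j * d j) ->
  exists us, forall x, span us x.
Proof.
move=> Hdec Hgen.
have : forall l : seq I, exists us, forall x_ : I -> T, (forall i, A i (x_ i)) ->
    span us (\sum_(i <- l) x_ i).
  elim => [|i l [us IH]].
    by exists [::] => x_ _; rewrite big_nil.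
  case: (Hgen i) => m [d Hd].
  exists ([seq d j | j <- index_enum 'I_m] ++ us) => x_ Hx.
  rewrite big_cons; apply: span_cat; last exact: IH.
  case: (Hd _ (Hx i)) => r [Hr ->].
  exact: span_fam.
case/(_ (index_enum I)) => us Hus; exists us => x.
case: (Hdec x) => x_ [Hx ->]; exact: Hus.
Qed.

Lemma core_noeth us : (forall x, span us x) -> left_noetherian_in (@whole_ring T).
Proof.
move=> Hus I HI Hc.
have HI' : forall n, submod (I n).
  move=> n; case: (HI n) => _ I0 IB IM; split => //.
  by move=> r x _ Hx; apply: IM.
exact: (@NP_span us _ HI' (fun n x _ => Hus x) Hc).
Qed.

End Core.

Section Main.
Variable gT : finGroupType.
Variable S : nzRingType.
Variable S_ : gT -> S -> Prop.
Hypothesis Heps : epsilon_strongly_graded S_.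

Lemma R_mul a b : S_ 1%g a -> S_ 1%g b -> S_ 1%g (a * b).
Proof.
case: Heps => [[_ _ _ Hm] _ _] Ha Hb.
by have := Hm _ _ _ _ Ha Hb; rewrite mulg1.
Qed.

Lemma prod2_one (A B : S -> Prop) a b : A a -> B b -> prod2 A B (a * b).
Proof.
move=> Ha Hb; exists 1%N, (fun _ => a), (fun _ => b); split => //.
by rewrite big_ord1.
Qed.

Lemma gen_left g : exists m (d : 'I_m -> S), forall s, S_ g s ->
      exists r : 'I_m -> S, (forall j, S_ 1%g (r j)) /\ s = \sum_(j < m) r j * d j.
Proof.
case: Heps => [[_ _ _ Hm] H3 Hid].
case: (Hid g^-1%g); rewrite invgK => e [[m [c [d [Hcd ->]]]] He].
exists m, d => s Hs.
exists (fun j => s * c j); split.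
  move=> j; have := Hm _ _ _ _ Hs (proj1 (Hcd j)); by rewrite mulgV.
have -> : \sum_(j < m) s * c j * d j = s * \sum_(j < m) c j * d j.
  by rewrite mulr_sumr; apply: eq_bigr => j _; rewrite mulrA.
have := (proj1 (H3 g s) Hs) => [[n [a [b [c' [Habc Es]]]]]].
rewrite [in LHS]Es [in RHS]Es mulr_suml; apply: eq_bigr => i _.
case: (Habc i) => Ha Hb Hc'.
have Hp : prod2 (S_ g^-1) (S_ g) (b i * c' i) by apply: prod2_one.
have E := proj2 (He _ Hp).
rewrite -!mulrA; congr (_ * _); rewrite mulrA; symmetry.
by rewrite -[in RHS]E -!mulrA.
Qed.

Lemma gen_right g : exists m (d : 'I_m -> S), forall s, S_ g s ->
      exists r : 'I_m -> S, (forall j, S_ 1%g (r j)) /\ s = \sum_(j < m) d j * r j.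
Proof.
case: Heps => [[_ _ _ Hm] H3 Hid].
case: (Hid g) => e [[m [a [b [Hab ->]]]] He].
exists m, a => s Hs.
exists (fun j => b j * s); split.
  move=> j; have := Hm _ _ _ _ (proj2 (Hab j)) Hs; by rewrite mulVg.
have -> : \sum_(j < m) a j * (b j * s) = (\sum_(j < m) a j * b j) * s.
  by rewrite mulr_suml; apply: eq_bigr => j _; rewrite mulrA.
have := (proj1 (H3 g s) Hs) => [[n [a' [b' [c' [Habc Es]]]]]].
rewrite [in LHS]Es [in RHS]Es mulr_sumr; apply: eq_bigr => i _.
case: (Habc i) => Ha Hb Hc'.
have Hp : prod2 (S_ g) (S_ g^-1) (a' i * b' i) by apply: prod2_one.
have E := proj1 (He _ Hp).
by rewrite mulrA E.
Qed.

End Main.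

Theorem proposition3p4 (gT : finGroupType) (S : nzRingType)
  (S_ : gT -> S -> Prop) (Heps : epsilon_strongly_graded S_) :
  (left_noetherian_in (S_ 1%g) -> left_noetherian_in (@whole_ring S)) /\
  (right_noetherian_in (S_ 1%g) -> right_noetherian_in (@whole_ring S)).
Proof.
have Hadd : is_addsubgroup (S_ 1%g) by case: Heps => [[Ha _ _ _] _ _].
have Hdec : forall s, exists x : gT -> S, (forall g, S_ g (x g)) /\ s = \sum_(g : gT) x g.
  by case: Heps => [[_ Hd _ _] _ _].
split.
- move=> Hl.
  have [us Hus] := @span_all S (S_ 1%g) gT S_ Hdec (gen_left Heps).
  exact: (@core_noeth S (S_ 1%g) Hadd (R_mul Heps) Hl us Hus).
- move=> Hr.
  have Hl : @left_noetherian_in (S^c) (S_ 1%g).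
    move=> I HI Hc; exact: (Hr I HI Hc).
  have Hmul : forall a b : S^c, S_ 1%g a -> S_ 1%g b -> S_ 1%g (a * b).
    by move=> a b Ha Hb; exact: (R_mul Heps Hb Ha).
  have Hgen : forall g : gT, exists m (d : 'I_m -> S^c), forall s, S_ g s ->
      exists r : 'I_m -> S^c, (forall j, S_ 1%g (r j)) /\ s = \sum_(j < m) r j * d j.
    move=> g; case: (gen_right Heps g) => m [d Hd]; exists m, d => s Hs.
    case: (Hd s Hs) => r [Hr0 Es]; exists r; split => //.
  have [us Hus] := @span_all (S^c) (S_ 1%g) gT S_ Hdec Hgen.
  move=> I HI Hc.
  exact: (@core_noeth (S^c) (S_ 1%g) Hadd Hmul Hl us Hus I HI Hc).
Qed.
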